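(* Let $\lambda_1\ge\dots\ge\lambda_p\ge0$, $\gamma\ge0$, $r\in\{1,\dots,p\}$ and $i\in\{1,\dots,p\}$. Let $M,\Gamma\in\mathbb{R}^p$ with $\max_j|\Gamma_j|\le\gamma$ and put $T=M+\Gamma$. If $T\in H_r$ and $|T_i|>\lambda_r$, then $M^{(i)}\in H_r^{\gamma}$.
   Context: For $w$ (possibly with entries in $\mathbb{R}\cup\{\infty\}$), $|w|_{(1)}\ge\dots\ge|w|_{(p)}$ denote the ordered absolute values of its entries. $M^{(i)}$ is the vector with $M^{(i)}_j=M_j$ for $j\neq i$ and $M^{(i)}_i=\infty$. $$H_r=\Big\{w:\ \forall_{j\le r}\ \sum_{l=j}^r\lambda_l<\sum_{l=j}^r|w|_{(l)}\ \text{ and }\ \forall_{j\ge r+1}\ \sum_{l=r+1}^j\lambda_l\ge\sum_{l=r+1}^j|w|_{(l)}\Big\},$$ $$H_r^{\gamma}=\Big\{w:\ \forall_{j\le r}\ \sum_{l=j}^r(\lambda_l-\gamma)<\sum_{l=j}^r|w|_{(l)}\ \text{ and }\ \forall_{j\ge r+1}\ \sum_{l=r+1}^j(\lambda_l+\gamma)\ge\sum_{l=r+1}^j|w|_{(l)}\Big\}.$$ *)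

(* Defs.v *)
From HB Require Import structures.
From mathcomp Require Import all_boot all_order all_algebra.
From mathcomp Require Import all_classical all_reals ereal.
Set Implicit Arguments. Unset Strict Implicit. Unset Printing Implicit Defensive.
Import Order.TTheory GRing.Theory Num.Theory.
Local Open Scope ring_scope.
Local Open Scope ereal_scope.

Section Defs.
Variable R : realType.

(* |w|_(l), 1-indexed: the l-th largest absolute value of the entries of w *)
Definition ord_abs (p : nat) (w : 'I_p -> \bar R) (l : nat) : \bar R :=
  nth 0 (sort (fun x y : \bar R => y <= x) [seq `|w k| | k <- enum 'I_p]) l.-1.

(* H_r (lam indexed from 1: lam 1 >= ... >= lam p) *)
Definition H_set (p : nat) (lam : nat -> R) (r : nat) (w : 'I_p -> \bar R) : Prop :=
  (forall j, (1 <= j <= r)%N ->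
     \sum_(j <= l < r.+1) (lam l)%:E < \sum_(j <= l < r.+1) ord_abs w l) /\
  (forall j, (r.+1 <= j <= p)%N ->
     \sum_(r.+1 <= l < j.+1) ord_abs w l <= \sum_(r.+1 <= l < j.+1) (lam l)%:E).

Definition H_gamma (p : nat) (lam : nat -> R) (gamma : R) (r : nat)
    (w : 'I_p -> \bar R) : Prop :=
  (forall j, (1 <= j <= r)%N ->
     \sum_(j <= l < r.+1) (lam l - gamma)%:E < \sum_(j <= l < r.+1) ord_abs w l) /\
  (forall j, (r.+1 <= j <= p)%N ->
     \sum_(r.+1 <= l < j.+1) ord_abs w l <= \sum_(r.+1 <= l < j.+1) (lam l + gamma)%:E).

Definition replace_inf (p : nat) (M : 'I_p -> R) (i : 'I_p) : 'I_p -> \bar R :=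
  fun j => if j == i then +oo else (M j)%:E.

End Defs.

(* Main.v *)
Require Import Defs.
From HB Require Import structures.
From mathcomp Require Import all_boot all_order all_algebra.
From mathcomp Require Import all_classical all_reals ereal.
Import Order.TTheory GRing.Theory Num.Theory.
Local Open Scope ring_scope.
From mathcomp Require Import zify lra.

Module Gen.
Local Set Implicit Arguments. Local Unset Strict Implicit.
Local Open Scope ereal_scope.
Local Notation ge := (fun x y : \bar _ => (y <= x)%E).

Lemma srt_nth {R : realType} (s : seq (\bar R)) i j : (i <= j < size s)%N ->
  nth 0 (sort ge s) j <= nth 0 (sort ge s) i.
Proof.
move=> /andP[hij hj].
have st : sorted ge (sort ge s) by apply: sort_sorted => x y; exact: le_total.
apply: (sorted_leq_nth _ _ _ st) => //.
- by move=> x y z /= h1 h2; exact: le_trans h2 h1.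
- by rewrite inE size_sort (leq_ltn_trans hij).
- by rewrite inE size_sort.
Qed.

Lemma cnt_sort {R : realType} (P : pred (\bar R)) (s : seq (\bar R)) : count P s = count P (sort ge s).
Proof. by apply/permP; rewrite perm_sym perm_sort. Qed.

Lemma take_ge {R : realType} (s : seq (\bar R)) m x : (m < size s)%N -> x \in take m.+1 (sort ge s) ->
  nth 0 (sort ge s) m <= x.
Proof.
move=> hm /(nthP 0) [k hk <-].
have hk' : (k < m.+1)%N.
  by move: hk; rewrite size_take_min => /leq_trans; apply; rewrite geq_minl.
rewrite nth_take //; apply: srt_nth; rewrite -ltnS hk' /=; by [].
Qed.

Lemma drop_le {R : realType} (s : seq (\bar R)) m x : (m < size s)%N -> x \in drop m (sort ge s) ->
  x <= nth 0 (sort ge s) m.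
Proof.
move=> hm /(nthP 0) [k hk <-].
rewrite nth_drop; apply: srt_nth; rewrite leq_addr /=.
by move: hk; rewrite size_drop size_sort -ltn_subRL.
Qed.

Lemma cnt_split {R : realType} (P : pred (\bar R)) (s : seq (\bar R)) m :
  count P s = (count P (take m (sort ge s)) + count P (drop m (sort ge s)))%N.
Proof. by rewrite -count_cat cat_take_drop cnt_sort. Qed.

Lemma cnt_take_all {R : realType} (P : pred (\bar R)) (s : seq (\bar R)) m : (m < size s)%N ->
  {in take m.+1 (sort ge s), forall x, P x} -> (m < count P s)%N.
Proof.
move=> hm hP; rewrite (cnt_split P s m.+1).
have -> : count P (take m.+1 (sort ge s)) = m.+1.
  have /eqP -> : count P (take m.+1 (sort ge s)) == size (take m.+1 (sort ge s)).
    by rewrite -all_count; apply/allP.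
  by rewrite size_takel // size_sort.
by rewrite ltnS leq_addr.
Qed.

Lemma cnt_drop_none {R : realType} (P : pred (\bar R)) (s : seq (\bar R)) m : (m < size s)%N ->
  {in drop m (sort ge s), forall x, ~~ P x} -> (count P s <= m)%N.
Proof.
move=> hm hP; rewrite (cnt_split P s m).
have -> : count P (drop m (sort ge s)) = 0%N.
  by apply/eqP; rewrite eqn0Ngt -has_count; apply/hasPn.
rewrite addn0; apply: leq_trans (count_size _ _) _.
by rewrite size_take size_sort hm.
Qed.

Lemma L1 {R : realType} (s : seq (\bar R)) m (c : \bar R) : (m < size s)%N -> (m < count (fun x => (c <= x)%E) s)%N ->
  c <= nth 0 (sort ge s) m.
Proof.
move=> hm hc; rewrite leNgt; apply/negP => hlt.
suff: (count (fun x : \bar R => (c <= x)%E) s <= m)%N by rewrite leqNgt hc.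
apply: cnt_drop_none => // x /(drop_le hm) hx.
by rewrite -ltNge (le_lt_trans hx hlt).
Qed.

Lemma L2 {R : realType} (s : seq (\bar R)) m : (m < size s)%N ->
  (m < count (fun x => (nth 0 (sort ge s) m <= x)%E) s)%N.
Proof. by move=> hm; apply: cnt_take_all => // x /(take_ge hm). Qed.

Lemma L3 {R : realType} (s : seq (\bar R)) m : (m < size s)%N ->
  (count (fun x => (nth 0 (sort ge s) m < x)%E) s <= m)%N.
Proof. by move=> hm; apply: cnt_drop_none => // x /(drop_le hm); rewrite -leNgt. Qed.

Lemma L4 {R : realType} (s : seq (\bar R)) m (c : \bar R) : (m < size s)%N -> (count (fun x => (c < x)%E) s <= m)%N ->
  nth 0 (sort ge s) m <= c.
Proof.
move=> hm hc; rewrite leNgt; apply/negP => hlt.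
suff: (m < count (fun x : \bar R => (c < x)%E) s)%N by rewrite ltnNge hc.
apply: cnt_take_all => // x /(take_ge hm) hx.
exact: lt_le_trans hlt hx.
Qed.
End Gen.
Import Gen.

Theorem lemma2 (R : realType) (p : nat) (lam : nat -> R) (gamma : R)
  (r : nat) (i : 'I_p) (M Gam : 'I_p -> R)
  (hlam : forall l, (1 <= l < p)%N -> lam l.+1 <= lam l)
  (hlam0 : 0 <= lam p)
  (hgamma : 0 <= gamma)
  (hr : (1 <= r <= p)%N)
  (hGam : forall j, `|Gam j| <= gamma)
  (hT : H_set lam r (fun j => (M j + Gam j)%:E))
  (hTi : lam r < `|M i + Gam i|) :
  H_gamma lam gamma r (replace_inf M i).
Proof.
set ge := (fun x y : \bar R => (y <= x)%E).
set fT := fun k : 'I_p => `|((M k + Gam k)%:E)|%E.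
set fM := fun k : 'I_p => `|replace_inf M i k|%E.
set sT := [seq fT k | k <- enum 'I_p].
set sM := [seq fM k | k <- enum 'I_p].
have szT : size sT = p by rewrite size_map size_enum_ord.
have szM : size sM = p by rewrite size_map size_enum_ord.
have oT : forall l, ord_abs (fun j => (M j + Gam j)%:E) l = nth 0%E (sort ge sT) l.-1 by [].
have oM : forall l, ord_abs (replace_inf M i) l = nth 0%E (sort ge sM) l.-1 by [].
have finT : forall m, exists a : R, nth 0%E (sort ge sT) m = a%:E.
  move=> m; case: (ltnP m (size (sort ge sT))) => hm.
    have : nth 0%E (sort ge sT) m \in sT by rewrite -(perm_mem (permEl (perm_sort ge sT))) mem_nth.
    by case/mapP => k _ ->; exists `|M k + Gam k|.
  by rewrite nth_default //; exists 0.
pose a l := fine (nth 0%E (sort ge sT) l.-1).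
have aE : forall l, nth 0%E (sort ge sT) l.-1 = (a l)%:E.
  by move=> l; rewrite /a; case: (finT l.-1) => x ->.
have hTk : forall k, `|M k| <= `|M k + Gam k| + gamma.
  move=> k; have := ler_normB (M k + Gam k) (Gam k); rewrite addrK.
  have := hGam k; lra.
have hMk : forall k, `|M k + Gam k| <= `|M k| + gamma.
  move=> k; have := ler_normD (M k) (Gam k); have := hGam k; lra.
case: hT => hT1 hT2.
split.
- move=> j hj.
  have claim : forall l, (1 <= l <= p)%N -> ((a l - gamma)%:E <= ord_abs (replace_inf M i) l)%E.
    move=> l hl; rewrite oM; apply: L1; first by rewrite szM; lia.
    have := @L2 _ sT l.-1; rewrite szT => /(_ ltac:(lia)).
    rewrite aE /sT /sM !count_map => /leq_trans; apply; apply: sub_count => k /=.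
    rewrite /fT /fM /replace_inf; case: eqP => _ /=; first by rewrite leey.
    rewrite !lee_fin => h; have := hMk k; lra.
  have := hT1 j hj; rewrite [X in (_ < X)%E](eq_bigr (fun l => (a l)%:E)); last by move=> l _; rewrite oT aE.
  rewrite !sumEFin lte_fin => hs.
  apply: (@lt_le_trans _ _ (\sum_(j <= l < r.+1) (a l - gamma)%:E)%E).
    rewrite !sumEFin lte_fin !sumrB; lra.
  rewrite big_nat_cond [X in (_ <= X)%E]big_nat_cond; apply: lee_sum => l /andP[/andP[hl1 hl2] _].
  apply: claim; lia.
- move=> j hj.
  have hr1 : (r < p)%N by lia.
  have hTr : (a r.+1 <= lam r.+1).
    have := hT2 r.+1; rewrite leqnn hr1 => /(_ isT); rewrite !big_nat1 oT aE lee_fin.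
    by [].
  have hlr := hlam r ltac:(lia).
  have claim : forall l, (r.+1 <= l <= p)%N -> (ord_abs (replace_inf M i) l <= (a l + gamma)%:E)%E.
    move=> l hl.
    have hal : a l < `|M i + Gam i|.
      have : ((a l)%:E <= (a r.+1)%:E)%E.
        rewrite -!aE; apply: srt_nth; rewrite szT; lia.
      rewrite lee_fin; lra.
    rewrite oM; apply: L4; first by rewrite szM; lia.
    have := @L3 _ sT l.-1; rewrite szT => /(_ ltac:(lia)).
    apply: leq_trans; rewrite aE /sT /sM !count_map; apply: sub_count => k /=.
    rewrite /fT /fM /replace_inf; case: eqP => [->|_] /=.
      by move=> _; rewrite lte_fin.
    rewrite !lte_fin => h; have := hTk k; lra.
  have := hT2 j hj; rewrite [X in (X <= _)%E](eq_bigr (fun l => (a l)%:E)); last by move=> l _; rewrite oT aE.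
  rewrite !sumEFin lee_fin => hs.
  apply: (@le_trans _ _ (\sum_(r.+1 <= l < j.+1) (a l + gamma)%:E)%E).
    rewrite big_nat_cond [X in (_ <= X)%E]big_nat_cond; apply: lee_sum => l /andP[/andP[hl1 hl2] _].
    apply: claim; lia.
  rewrite !sumEFin lee_fin !big_split /=; lra.
Qed.
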